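(* Let $(N,+,* )$ be a nilpotent ring with adjoint operation $x\circ y=x+y+x*y$, let $S$ be a subring and $I$ a two-sided ideal of $N$ with $S\cap I=\{0\}$ and $N=S+I$. Then every $x\in N$ can be written uniquely as $x=s\circ i$ with $s\in S$, $i\in I$; define $x\bullet y=s\circ y\circ i$, so that $(N,+,\bullet)$ is a left brace, and let $r(x,y)=(\sigma_x(y),\tau_y(x))$ be its Yang–Baxter map. Let $X\subseteq N$ be such that $(X,r)$ is a solution of the set-theoretic Yang–Baxter equation. Let $J\subseteq I\cap X$ be a two-sided ideal of the ring $N$ and let $k:X\to X$ satisfy $k(x)-x\in J$ for all $x\in X$. Then $\tau_{k(y)}(x)-\tau_y(x)\in J$ for all $x,y\in X$. *)

(* Defs.v *)
(* A (non-unital, associative) ring N is given by an abelian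
   group V : zmodType together with an explicit multiplication [mul]. *)
From mathcomp Require Import all_boot all_algebra.
From Stdlib Require Import ClassicalEpsilon.
Set Implicit Arguments. Unset Strict Implicit. Unset Printing Implicit Defensive.
Import GRing.Theory.
Local Open Scope ring_scope.

Section NilRing.
Variable V : zmodType.
Variable mul : V -> V -> V.

Definition is_ring : Prop :=
  [/\ forall x y z, mul x (mul y z) = mul (mul x y) z,
      forall x y z, mul x (y + z) = mul x y + mul x z &
      forall x y z, mul (x + y) z = mul x z + mul y z].

Fixpoint rprod (x : V) (l : seq V) : V :=
  match l with [::] => x | y :: l' => mul x (rprod y l') end.

Definition nilpotent_ring : Prop :=
  exists n : nat, forall (x : V) (l : seq V), size l = n -> rprod x l = 0.

Definition subring (S : V -> Prop) : Prop :=
  [/\ S 0, forall x y, S x -> S y -> S (x - y) &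
      forall x y, S x -> S y -> S (mul x y)].

Definition ideal (I : V -> Prop) : Prop :=
  [/\ I 0, forall x y, I x -> I y -> I (x - y),
      forall r x, I x -> I (mul r x) & forall r x, I x -> I (mul x r)].

Definition circ (x y : V) : V := x + y + mul x y.

Variables (S I : V -> Prop).

Definition decomp_spec (x : V) (p : V * V) : Prop :=
  [/\ S p.1, I p.2 & x = circ p.1 p.2].

Definition decomp (x : V) : V * V :=
  epsilon (inhabits (0, 0)) (decomp_spec x).

Definition bullet (x y : V) : V :=
  circ (circ (decomp x).1 y) (decomp x).2.

Definition binv (x : V) : V :=
  epsilon (inhabits 0) (fun z => bullet z x = 0 /\ bullet x z = 0).

(* lambda map of the brace; sigma_x(y) = lambda_x(y) *)
Definition sigma (x y : V) : V := - x + bullet x y.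

Definition tau (y x : V) : V := bullet (binv (sigma x y)) (bullet x y).

Definition ybmap (p : V * V) : V * V := (sigma p.1 p.2, tau p.2 p.1).

Definition r12 (t : V * V * V) : V * V * V :=
  let p := ybmap (t.1.1, t.1.2) in (p.1, p.2, t.2).
Definition r23 (t : V * V * V) : V * V * V :=
  let p := ybmap (t.1.2, t.2) in (t.1.1, p.1, p.2).

Definition is_solution (X : V -> Prop) : Prop :=
  (forall x y, X x -> X y -> X (sigma x y) /\ X (tau y x)) /\
  (forall x y z, X x -> X y -> X z ->
     r12 (r23 (r12 (x, y, z))) = r23 (r12 (r23 (x, y, z)))).

End NilRing.

(* Main.v *)
Require Import Defs.
From mathcomp Require Import all_boot all_algebra.
From Stdlib Require Import ClassicalEpsilon.
Set Implicit Arguments. Unset Strict Implicit. Unset Printing Implicit Defensive.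
Import GRing.Theory.
Local Open Scope ring_scope.

Section Proof7.
Variable V : zmodType.
Variable mul : V -> V -> V.
Hypothesis Hr : is_ring mul.

Let mulA : forall x y z, mul x (mul y z) = mul (mul x y) z.
Proof. by case: Hr. Qed.
Let mulDr : forall x y z, mul x (y + z) = mul x y + mul x z.
Proof. by case: Hr. Qed.
Let mulDl : forall x y z, mul (x + y) z = mul x z + mul y z.
Proof. by case: Hr. Qed.
Lemma mx0 x : mul x 0 = 0.
Proof. by apply: (@addrI _ (mul x 0)); rewrite -mulDr !addr0. Qed.
Lemma m0x x : mul 0 x = 0.
Proof. by apply: (@addrI _ (mul 0 x)); rewrite -mulDl !addr0. Qed.
Lemma mxN x y : mul x (- y) = - mul x y.
Proof. by apply: (@addrI _ (mul x y)); rewrite -mulDr !subrr mx0. Qed.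
Lemma mNx x y : mul (- x) y = - mul x y.
Proof. by apply: (@addrI _ (mul x y)); rewrite -mulDl !subrr m0x. Qed.
Lemma mxB x y z : mul x (y - z) = mul x y - mul x z.
Proof. by rewrite mulDr mxN. Qed.
Lemma mBx x y z : mul (x - y) z = mul x z - mul y z.
Proof. by rewrite mulDl mNx. Qed.

Local Notation c := (circ mul).
Lemma c0x x : c 0 x = x. Proof. by rewrite /circ m0x add0r addr0. Qed.
Lemma cx0 x : c x 0 = x. Proof. by rewrite /circ mx0 !addr0. Qed.
Lemma cA x y z : c x (c y z) = c (c x y) z.
Proof.
rewrite /circ !mulDr !mulDl mulA.
set a := mul x y; set b := mul x z; set d := mul y z; set e := mul a z.
rewrite -!addrA; congr (_ + _); congr (_ + _); rewrite [RHS]addrCA; congr (_ + _).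
by rewrite addrCA; congr (_ + _); rewrite addrCA.
Qed.

Definition closedP (P : V -> Prop) :=
  [/\ P 0, forall x y, P x -> P y -> P (x - y) & forall x y, P x -> P y -> P (mul x y)].

Lemma cl_N P x : closedP P -> P x -> P (- x).
Proof. by case=> h0 hB _ hx; rewrite -sub0r; apply: hB. Qed.
Lemma cl_D P x y : closedP P -> P x -> P y -> P (x + y).
Proof.
move=> hP hx hy; case: (hP) => _ hB _.
by rewrite -[y]opprK; apply: hB => //; apply: cl_N.
Qed.
Lemma cl_c P x y : closedP P -> P x -> P y -> P (c x y).
Proof.
move=> hP hx hy; case: (hP) => _ _ hM.
by rewrite /circ; apply: (cl_D hP); [apply: (cl_D hP)|apply: hM].
Qed.

Definition it x m := iter m (fun z => - x - mul x z) 0.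
Definition pw x m := iter m (fun z => mul x z) x.

Lemma pw_rprod x m : pw x m = rprod mul x (nseq m x).
Proof. by elim: m => //= m <-. Qed.

Lemma it_diff x m : it x m.+1 - it x m = if odd m then pw x m else - pw x m.
Proof.
elim: m => [|m IH].
  by rewrite /it /= mx0 !subr0.
have -> : it x m.+2 - it x m.+1 = - mul x (it x m.+1 - it x m).
  rewrite mxB /it [iter m.+2 _ _]/= [iter m.+1 _ _]/= -/(it x m) -/(it x m.+1).
  rewrite opprB opprD opprK addrACA addNr add0r addrC opprK.
  reflexivity.
rewrite IH /=; case: (odd m) => /=; by rewrite ?mxN ?opprK.
Qed.

Lemma it_cl P x m : closedP P -> P x -> P (it x m).
Proof.
move=> hP hx; case: (hP) => h0 hB hM.
by elim: m => //= m IH; apply: hB; [apply: cl_N|apply: hM].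
Qed.

Hypothesis Hn : nilpotent_ring mul.

Lemma rinv x : exists z, c x z = 0 /\ forall P, closedP P -> P x -> P z.
Proof.
case: Hn => n Hn'.
have hp : pw x n = 0 by rewrite pw_rprod Hn' // size_nseq.
exists (it x n); split; last by move=> P hP hx; apply: it_cl.
have : it x n.+1 - it x n = 0 by rewrite it_diff hp oppr0; case: odd.
move/eqP; rewrite subr_eq0 => /eqP; rewrite {1}/it /= -/(it x n) => E.
by rewrite /circ -{1}E addrA subrr add0r addNr.
Qed.

Lemma cinv x : exists z, [/\ c x z = 0, c z x = 0 & forall P, closedP P -> P x -> P z].
Proof.
have [z [hz hzP]] := rinv x; have [w [hw _]] := rinv z.
have xw : x = w by rewrite -[x]cx0 -hw cA hz c0x.
by exists z; split => //; rewrite xw.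
Qed.

Lemma c_cancl a b d : c a b = c a d -> b = d.
Proof.
have [a' [_ h _]] := cinv a => E.
by rewrite -(c0x b) -(c0x d) -h -!cA E.
Qed.
Lemma c_cancr a b d : c b a = c d a -> b = d.
Proof.
have [a' [h _ _]] := cinv a => E.
by rewrite -(cx0 b) -(cx0 d) -h !cA E.
Qed.


Variables S I J : V -> Prop.
Hypothesis HS : subring mul S.
Hypothesis HI : ideal mul I.
Hypothesis HSI : forall x, S x -> I x -> x = 0.
Hypothesis Hdec : forall x, exists s i, [/\ S s, I i & x = s + i].
Hypothesis HJ : ideal mul J.
Hypothesis HJI : forall x, J x -> I x.

Lemma clS : closedP S. Proof. by case: HS. Qed.
Lemma clI : closedP I. Proof. by case: HI => ? ? ? ?; split => // x y _; auto. Qed.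
Lemma clJ : closedP J. Proof. by case: HJ => ? ? ? ?; split => // x y _; auto. Qed.

Lemma dec_ex x : exists p, decomp_spec mul S I x p.
Proof.
have [s [i0 [hs hi0 ->]]] := Hdec x.
have [s' [h1 h2 hs']] := cinv s.
exists (s, c s' (s + i0)); split => //=; last by rewrite cA h1 c0x.
have -> : c s' (s + i0) = i0 + mul s' i0.
  rewrite /circ mulDr !addrA.
  have -> : s' + s + i0 + mul s' s = c s' s + i0.
    by rewrite /circ addrAC.
  by rewrite h2 add0r.
case: HI => _ _ hl _.
by apply: (cl_D clI) => //; apply: hl.
Qed.

Lemma dec_uniq s1 i1 s2 i2 : S s1 -> I i1 -> S s2 -> I i2 ->
  c s1 i1 = c s2 i2 -> s1 = s2 /\ i1 = i2.
Proof.
move=> h1 k1 h2 k2 E.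
have [s2' [a1 a2 a3]] := cinv s2; have [i1' [b1 b2 b3]] := cinv i1.
have E2 : c s2' s1 = c i2 i1'.
  have -> : c s2' s1 = c s2' (c (c s1 i1) i1') by rewrite -cA b1 cx0.
  by rewrite E !cA a2 c0x.
have Z : c s2' s1 = 0.
  apply: HSI; first by apply: (cl_c clS) => //; apply: a3 clS _.
  by rewrite E2; apply: (cl_c clI) => //; apply: b3 clI _.
have es : s1 = s2 by apply: (c_cancl (a := s2')); rewrite Z.
by split => //; apply: (c_cancl (a := s1)); rewrite E es.
Qed.

Lemma decP x : decomp_spec mul S I x (decomp mul S I x).
Proof. exact: epsilon_spec (dec_ex x). Qed.

Lemma decE s i : S s -> I i -> decomp mul S I (c s i) = (s, i).
Proof.
move=> hs hi; case: (decP (c s i)); case: (decomp _ _ _ _) => s' i' /= hs' hi' E.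
by have [-> ->] := dec_uniq hs' hi' hs hi (esym E).
Qed.

Definition cong a b := J (a - b).

Lemma JD x y : J x -> J y -> J (x + y). Proof. exact: cl_D clJ. Qed.
Lemma cong_refl a : cong a a. Proof. by rewrite /cong subrr; case: HJ. Qed.
Lemma cong_sym a b : cong a b -> cong b a.
Proof. by rewrite /cong => h; rewrite -opprB; apply: (cl_N clJ). Qed.
Lemma cong_trans a b d : cong a b -> cong b d -> cong a d.
Proof. by rewrite /cong => h1 h2; rewrite -[a](subrK b) -addrA; apply: JD. Qed.

Lemma cong_c a a' b b' : cong a a' -> cong b b' -> cong (c a b) (c a' b').
Proof.
rewrite /cong => ha hb.
have -> : c a b - c a' b' = (a - a') + (b - b') + (mul (a - a') b + mul a' (b - b')).
  rewrite mBx mxB [mul a b - _ + _]addrA subrK /circ opprD opprD.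
  by rewrite addrACA; congr (_ + _); rewrite addrACA.
case: HJ => _ _ hl hr.
by apply: JD; [apply: JD|apply: JD; [apply: hr|apply: hl]].
Qed.


Lemma dec_cong x x' : cong x x' ->
  (decomp mul S I x').1 = (decomp mul S I x).1 /\
  cong (decomp mul S I x').2 (decomp mul S I x).2.
Proof.
move=> hx.
case: (decP x); case: (decomp _ _ _ x) => s i /= hs hi Ex.
case: (decP x'); case: (decomp _ _ _ x') => s' i' /= hs' hi' Ex'.
have [xi [h1 h2 _]] := cinv x.
have hj : cong (c xi x') 0.
  rewrite -h2; apply: cong_c; [exact: cong_refl|exact: cong_sym].
have Jj : J (c xi x') by move: hj; rewrite /cong subr0.
have E : c s' i' = c s (c i (c xi x')) by rewrite -Ex' cA -Ex cA h1 c0x.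
have [-> ->] := dec_uniq hs' hi' hs (cl_c clI hi (HJI Jj)) E.
split => //; rewrite -{2}(cx0 i); apply: cong_c => //; exact: cong_refl.
Qed.

Lemma bullet_cong x x' y y' : cong x x' -> cong y y' ->
  cong (bullet mul S I x y) (bullet mul S I x' y').
Proof.
move=> hx hy; have [e1 e2] := dec_cong hx.
rewrite /bullet e1; apply: cong_c; last exact: cong_sym.
by apply: cong_c => //; exact: cong_refl.
Qed.

Lemma binv_spec x : bullet mul S I x (binv mul S I x) = 0.
Proof.
suff : bullet mul S I (binv mul S I x) x = 0 /\ bullet mul S I x (binv mul S I x) = 0.
  by case.
apply: (epsilon_spec (inhabits 0) (fun z => bullet mul S I z x = 0 /\ bullet mul S I x z = 0)).
case: (decP x); case: (decomp _ _ _ x) => s i /= hs hi Ex.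
have [s' [a1 a2 a3]] := cinv s; have [i' [b1 b2 b3]] := cinv i.
have hs' := a3 _ clS hs; have hi' := b3 _ clI hi.
exists (c s' i'); rewrite /bullet decE // Ex /=; split.
  by rewrite [c s' _]cA a2 c0x b1.
by rewrite (decE hs hi) /= [c s _]cA a1 c0x b2.
Qed.

Lemma binv_cong x x' : cong x x' -> cong (binv mul S I x) (binv mul S I x').
Proof.
move=> hx; have [e1 e2] := dec_cong hx.
have B := binv_spec x; have B' := binv_spec x'.
move: B B' e1 e2; rewrite /bullet.
set z := binv _ _ _ x; set z' := binv _ _ _ x'.
case: (decomp _ _ _ x) => s i; case: (decomp _ _ _ x') => s2 i2 /= B B' E1 e2; rewrite E1 in B'.
have E : c z i = c z' i2 by apply: (c_cancl (a := s)); rewrite !cA B B'.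
have [i' [b1 b2 _]] := cinv i; have [i2' [d1 d2 _]] := cinv i2.
have -> : z = c (c z' i2) i' by rewrite -E -cA b1 cx0.
have Ez' : c (c z' i2) i2' = z' by rewrite -cA d1 cx0.
rewrite -{2}Ez'; apply: cong_c; first exact: cong_refl.
have -> : i' = c (c i' i2) i2' by rewrite -cA d1 cx0.
rewrite -{2}(c0x i2') -b2; apply: cong_c; last exact: cong_refl.
by apply: cong_c; [exact: cong_refl|exact: e2].
Qed.

Lemma tau_cong x y y' : cong y' y ->
  cong (tau mul S I y' x) (tau mul S I y x).
Proof.
move=> hy; rewrite /tau /sigma.
have hb := bullet_cong (cong_refl x) hy.
apply: bullet_cong => //; apply: binv_cong.
by rewrite /cong opprD addrACA subrr add0r.
Qed.

End Proof7.

Unset Implicit Arguments.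
Theorem mainTheorem7 (V : zmodType) (mul : V -> V -> V)
    (S I X J : V -> Prop) (k : V -> V) :
  is_ring mul -> nilpotent_ring mul ->
  subring mul S -> ideal mul I ->
  (forall x, S x -> I x -> x = 0) ->
  (forall x, exists s i, [/\ S s, I i & x = s + i]) ->
  is_solution mul S I X ->
  ideal mul J -> (forall x, J x -> I x /\ X x) ->
  (forall x, X x -> X (k x)) -> (forall x, X x -> J (k x - x)) ->
  forall x y, X x -> X y -> J (tau mul S I (k y) x - tau mul S I y x).
Proof.
move=> Hr Hn HS HI HSI Hdec _ HJ HJIX _ Hk x y _ hy.
have HJI : forall z, J z -> I z by move=> z /HJIX [].
exact: (tau_cong Hr Hn HS HI HSI Hdec HJ HJI x (Hk y hy)).
Qed.
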